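(* Let $q$ be a prime power and $d\ge 3$. Let $\mathbb{F}_q[x,y]_d$ be the vector space of binary forms of degree $d$ over $\mathbb{F}_q$ (including $0$), and let \[ B_d=\{f\in\mathbb{F}_q[x,y]_d : f \text{ has a double root in } \mathbb{P}^1(\overline{\mathbb{F}}_q)\}, \] where by convention $0\in B_d$. Then $\#B_d=q^d+q^{d-1}-q^{d-2}$.
   Context: A binary form $f$ has a double root at a point of $\mathbb{P}^1(\overline{\mathbb{F}}_q)$ if the corresponding linear form divides $f$ at least twice over $\overline{\mathbb{F}}_q$; i.e. $B_d$ is the set of binary forms of degree $d$ which are not square-free, with $0$ regarded as not square-free. *)

(* Defs.v *)
From HB Require Import structures.
From mathcomp Require Import all_boot all_order all_algebra all_field.
From mathcomp Require Import mpoly.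
From mathcomp Require Import boolp.
Set Implicit Arguments. Unset Strict Implicit. Unset Printing Implicit Defensive.
Import GRing.Theory.
Local Open Scope ring_scope.

Definition binform (R : nzRingType) (d : nat) (c : {ffun 'I_d.+1 -> R})
  : {mpoly R[2]} :=
  \sum_(i < d.+1) c i *: ('X_0 ^+ i * 'X_1 ^+ (d - i)).

(* f has a double root in P^1 over some extension field L of F:
   a nonzero linear form b x - a y over L divides f at least twice in L[x,y].
   0 is regarded as having a double root (convention of the paper). *)
Definition has_double_root (F : fieldType) (d : nat) (c : {ffun 'I_d.+1 -> F})
  : Prop :=
  binform c = 0 \/
  exists (L : fieldType) (iota : {rmorphism F -> L}) (a b : L),
    (a, b) != (0, 0) /\
    exists g : {mpoly L[2]},
      map_mpoly iota (binform c) = (b *: 'X_0 - a *: 'X_1) ^+ 2 * g.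

Definition Bd (F : finFieldType) (d : nat) : {set {ffun 'I_d.+1 -> F}} :=
  [set c | `[< has_double_root c >]].

(* Main.v *)
Require Import Defs.
From HB Require Import structures.
From mathcomp Require Import all_boot all_order all_algebra all_field.
From mathcomp Require Import mpoly.
From mathcomp Require Import boolp.
From mathcomp Require Import zify ring.

Module H.
Set Implicit Arguments. Unset Strict Implicit. Unset Printing Implicit Defensive.
Import GRing.Theory.
Local Open Scope ring_scope.

Section Sqf.
Variable F : finFieldType.
Implicit Types (g b h u : {poly F}).

Lemma deriv0_pow p (chp : p \in [pchar F]) g :
  g^`() = 0 -> exists u, g = u ^+ p.
Proof.
move=> dg.
have pr : prime p := pcharf_prime chp.
have p0 : (0 < p)%N := prime_gt0 pr.
have inj : injective (fun x : F => x ^+ p).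
  move=> x y /= e.
  have : pFrobenius_aut chp (x - y) = 0 by rewrite rmorphB /= !pFrobenius_autE e subrr.
  by rewrite pFrobenius_autE => /eqP; rewrite expf_eq0 subr_eq0 => /andP[_ /eqP].
have [r rK Kr] := injF_bij inj.
exists (\poly_(j < size g) r (g`_(j * p))).
have chP : p \in [pchar {poly F}] by rewrite pchar_poly.
rewrite -(pFrobenius_autE chP) poly_def rmorph_sum /=.
have -> : \sum_(i < size g) pFrobenius_aut chP (r g`_(i * p) *: 'X^i)
   = \sum_(i < size g) g`_(i * p) *: 'X^(i * p).
  apply: eq_bigr => i _; rewrite pFrobenius_autE exprZn Kr -exprM //.
apply/polyP => i; rewrite coef_sumMXn.
have [gi0|gi0] := eqVneq g`_i 0.
  rewrite gi0 big1 // => j /andP[_ /eqP ji]; rewrite ji; exact: gi0.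
have ip : (p %| i)%N.
  case: i gi0 => [|k] gik; first by rewrite dvdn0.
  rewrite (dvdn_pcharf chp); apply/eqP.
  have := congr1 (fun q : {poly F} => q`_k) dg; rewrite coef_deriv coef0.
  idtac.
  move=> /eqP H; rewrite -mulr_natr mulf_eq0 (negbTE gik) /= in H; exact/eqP.
have ilt : (i %/ p < size g)%N.
  apply: leq_ltn_trans (leq_div _ _) _.
  by rewrite ltnNge; apply: contra gi0 => /leq_sizeP ->.
rewrite (big_pred1 (Ordinal ilt)) /= ?divnK //.
move=> j /=; rewrite /eq_op /=.
apply/eqP/eqP => [<-|->]; first by rewrite mulnK.
by rewrite divnK.
Qed.

Lemma sq_factor_gen b n : forall g, (size g <= n)%N -> (1 < size g)%N ->
  g %| b -> g %| b^`() -> b != 0 -> exists h, (1 < size h)%N /\ h ^+ 2 %| b.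
Proof.
have [p pr chp] := finPcharP F.
elim: n => [|n IH] g sg sg1 gb gb' b0; first by move: (leq_trans sg1 sg).
have g0 : g != 0 by rewrite -size_poly_gt0 (ltn_trans _ sg1).
have [dg0|dg0] := eqVneq g^`() 0.
  have [u gu] := deriv0_pow chp dg0.
  exists u; split.
    rewrite ltnNge; apply/negP => /size1_polyC uc.
    by move: sg1; rewrite gu uc -rmorphXn size_polyC; case: (_ != 0).
  apply: dvdp_trans gb; rewrite gu dvdp_exp2l //.
  exact: (prime_gt1 pr).
have db : b = (b %/ g) * g by rewrite divpK.
have gr : g %| (b %/ g) * g^`().
  have e : b^`() = (b %/ g)^`() * g + (b %/ g) * g^`().
    rewrite {1}db derivM; reflexivity.
  have h1 : g %| (b %/ g)^`() * g by apply: dvdp_mull; exact: dvdpp.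
  by move: gb'; rewrite e (dvdp_addr _ h1).
have [cop|ncop] := boolP (coprimep g g^`()).
  exists g; split => //.
  by rewrite [X in _ %| X]db expr2 dvdp_mul2r // -(Gauss_dvdpl _ cop).
pose h := gcdp g g^`().
have h0 : h != 0 by rewrite gcdp_eq0 negb_and g0.
have sh1 : (1 < size h)%N.
  by move: ncop; rewrite /coprimep -/h ltn_neqAle eq_sym => ->; rewrite size_poly_gt0.
apply: (IH h) => //.
- rewrite -ltnS; apply: leq_trans sg.
  apply: leq_ltn_trans (lt_size_deriv _); last by rewrite -size_poly_gt0 (ltn_trans _ sg1).
  by apply: dvdp_leq => //; rewrite dvdp_gcdr.
- exact: dvdp_trans (dvdp_gcdl _ _) gb.
- exact: dvdp_trans (dvdp_gcdl _ _) gb'.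
Qed.

Definition sqf (p : {poly F}) := coprimep p p^`().

Lemma sqf_split b : b != 0 -> ~~ sqf b -> exists h, (1 < size h)%N /\ h ^+ 2 %| b.
Proof.
move=> b0 nb; apply: (@sq_factor_gen b _ (gcdp b b^`())) => //.
- by rewrite ltn_neqAle eq_sym nb size_poly_gt0 gcdp_eq0 negb_and b0.
- exact: dvdp_gcdl.
- exact: dvdp_gcdr.
Qed.

Lemma sqf_nosq b h : sqf b -> h ^+ 2 %| b -> (size h <= 1)%N.
Proof.
move=> sb /dvdpP [w bw]; move: sb; rewrite bw => sb.
have hh : h %| h ^+ 2 by rewrite expr2; apply: dvdp_mull; exact: dvdpp.
have hb : h %| w * h ^+ 2 by apply: dvdp_mull.
have hb' : h %| (w * h ^+ 2)^`().
  rewrite derivM; apply: dvdp_add; first by apply: dvdp_mull.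
  apply: dvdp_mull; rewrite expr2 derivM; apply: dvdp_add.
    by apply: dvdp_mull; exact: dvdpp.
  by apply: dvdp_mulr; exact: dvdpp.
have : h %| gcdp (w * h ^+ 2) (w * h ^+ 2)^`() by rewrite dvdp_gcd hb hb'.
move: sb; rewrite /sqf /coprimep => /eqP s1 hd.
have gn0 : gcdp (w * h ^+ 2) (w * h ^+ 2)^`() != 0 by rewrite -size_poly_gt0 s1.
by rewrite -s1 dvdp_leq.
Qed.

Lemma sqfZ c p : c != 0 -> sqf (c *: p) = sqf p.
Proof. by move=> c0; rewrite /sqf derivZ coprimepZl // coprimepZr. Qed.

End Sqf.

Section Count.
Variable F : finFieldType.

Definition toP n (c : {ffun 'I_n -> F}) : {poly F} :=
  \poly_(i < n) (if insub i is Some j then c j else 0).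
Definition fromP n (p : {poly F}) : {ffun 'I_n -> F} := [ffun i : 'I_n => p`_i].
Definition mon n (c : {ffun 'I_n -> F}) := 'X^n + toP c.

Lemma size_toP n (c : {ffun 'I_n -> F}) : (size (toP c) <= n)%N.
Proof. exact: size_poly. Qed.

Lemma coef_toP n (c : {ffun 'I_n -> F}) (j : 'I_n) : (toP c)`_j = c j.
Proof. by rewrite coef_poly ltn_ord valK. Qed.

Lemma coef_toP_ge n (c : {ffun 'I_n -> F}) i : (n <= i)%N -> (toP c)`_i = 0.
Proof. by move=> h; rewrite coef_poly ltnNge h. Qed.

Lemma toPK n (p : {poly F}) : (size p <= n)%N -> toP (fromP n p) = p.
Proof.
move=> sp; apply/polyP => i.
case: (ltnP i n) => [lt|ge]; last first.
  by rewrite coef_toP_ge //; apply/esym; apply: (leq_sizeP _ _ sp).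
by rewrite (coef_toP _ (Ordinal lt)) ffunE.
Qed.

Lemma fromPK n : cancel (@toP n) (fromP n).
Proof. by move=> c; apply/ffunP => i; rewrite ffunE coef_toP. Qed.

Lemma toP_inj n : injective (@toP n).
Proof. exact: can_inj (@fromPK n). Qed.

Lemma size_mon n (c : {ffun 'I_n -> F}) : size (mon c) = n.+1.
Proof. by rewrite /mon size_polyDl size_polyXn // ltnS size_toP. Qed.

Lemma mon_monic n (c : {ffun 'I_n -> F}) : mon c \is monic.
Proof. by rewrite monicE /mon lead_coefDl ?lead_coefXn // size_polyXn ltnS size_toP. Qed.

Lemma mon_inj n : injective (@mon n).
Proof. by move=> c c' /addrI /toP_inj. Qed.

Lemma monK n (p : {poly F}) : p \is monic -> size p = n.+1 -> mon (fromP n p) = p.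
Proof.
move=> mp sp; apply/polyP => i; rewrite coefD coefXn.
case: (ltngtP i n) => [lt|gt|->].
- by rewrite (coef_toP _ (Ordinal lt)) ffunE add0r.
- by rewrite coef_toP_ge ?(ltnW gt) // add0r; apply/esym/(leq_sizeP _ _ (eq_leq sp)).
- by rewrite coef_toP_ge // addr0 -(monicP mp) /lead_coef sp.
Qed.

Lemma decomp_ex (f : {poly F}) : f \is monic ->
  exists a b, [/\ a \is monic, b \is monic, sqf b & f = a ^+ 2 * b].
Proof.
move: {2}(size f) (leqnn (size f)) => n; elim: n f => [|n IH] f sf mf.
  by move: sf; rewrite leqn0 size_poly_eq0 (negbTE (monic_neq0 mf)).
have [sq|nsq] := boolP (sqf f).
  by exists 1, f; rewrite expr1n mul1r monic1.
have [h [sh hf]] := sqf_split (monic_neq0 mf) nsq.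
have lh0 : lead_coef h != 0 by rewrite lead_coef_eq0 -size_poly_gt0 ltnW.
pose h' := (lead_coef h)^-1 *: h.
have mh' : h' \is monic by rewrite monicE lead_coefZ mulVf.
have sh' : size h' = size h by rewrite size_scale // invr_eq0.
have hf' : h' ^+ 2 %| f by rewrite exprZn dvdpZl // expf_neq0 // invr_eq0.
have ef : f = f %/ h' ^+ 2 * h' ^+ 2 by rewrite divpK.
have mh2 : h' ^+ 2 \is monic by apply: monic_exp.
have mf1 : f %/ h' ^+ 2 \is monic by rewrite -(monicMr _ mh2) -ef.
have sf1 : (size (f %/ h' ^+ 2)%R <= n)%N.
  rewrite -ltnS; apply: leq_trans sf.
  rewrite {2}ef size_Mmonic ?monic_neq0 //.
  have : (1 < size (h' ^+ 2))%N.
    rewrite expr2 size_Mmonic ?monic_neq0 // sh'.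
    by case: (size h) sh => [|[|k]] // _; rewrite !addSn !addnS.
  case: (size (h' ^+ 2)) => [|[|k]] //= _.
  by rewrite !addnS /= ltnS leq_addr.
have [a [b [ma mb sb e]]] := IH _ sf1 mf1.
exists (a * h'), b; split => //; first by rewrite monicMl.
by rewrite ef e exprMn mulrAC.
Qed.

Lemma decomp_uniq (a a' b b' : {poly F}) : a \is monic -> a' \is monic -> sqf b -> sqf b' ->
  a ^+ 2 * b = a' ^+ 2 * b' -> a = a' /\ b = b'.
Proof.
move=> ma ma' sb sb' e.
have a0 := monic_neq0 ma.
pose g := gcdp a a'.
have g0 : g != 0 by rewrite gcdp_eq0 negb_and a0.
pose u := a %/ g; pose u' := a' %/ g.
have ea : a = u * g by rewrite divpK // dvdp_gcdl.
have ea' : a' = u' * g by rewrite divpK // dvdp_gcdr.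
have cop : coprimep u u' by apply: coprimep_div_gcd; rewrite a0.
have e2 : u ^+ 2 * b = u' ^+ 2 * b'.
  apply: (@mulIf _ (g ^+ 2)); first by rewrite expf_neq0.
  by rewrite mulrAC -exprMn -ea e ea' exprMn mulrAC.
have su : (size u <= 1)%N.
  apply: (sqf_nosq sb').
  rewrite -(Gauss_dvdpr _ (coprimep_expr 2 (coprimep_expl 2 cop))) -e2.
  by apply: dvdp_mulr; exact: dvdpp.
have su' : (size u' <= 1)%N.
  apply: (sqf_nosq sb).
  have cop' : coprimep (u' ^+ 2) (u ^+ 2).
    by apply: coprimep_expr; apply: coprimep_expl; rewrite coprimep_sym.
  rewrite -(Gauss_dvdpr _ cop') e2.
  by apply: dvdp_mulr; exact: dvdpp.
have u0 : u != 0 by apply: contra_neq a0 => uz; rewrite ea uz mul0r.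
have u0' : u' != 0.
  by apply: contra_neq (monic_neq0 ma') => uz; rewrite ea' uz mul0r.
have eu : u %= 1 by rewrite -size_poly_eq1 eqn_leq su size_poly_gt0.
have eu' : u' %= 1 by rewrite -size_poly_eq1 eqn_leq su' size_poly_gt0.
have eaa : a %= a'.
  rewrite ea ea'; apply: (eqp_trans (eqp_mulr g eu)).
  by rewrite eqp_sym; apply: (eqp_mulr g eu').
have aa : a = a' by apply/eqP; rewrite -eqp_monic.
split => //; move: e; rewrite aa; apply: mulfI.
by rewrite expf_neq0 // -aa.
Qed.


Lemma fromP_mon n (c : {ffun 'I_n -> F}) : fromP n (mon c) = c.
Proof.
by apply/ffunP => i; rewrite ffunE coefD coefXn (ltn_eqF (ltn_ord i)) add0r coef_toP.
Qed.

Definition s n := #|[set c : {ffun 'I_n -> F} | sqf (mon c)]|.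

Lemma half_le k n : (k < n./2.+1)%N = (k.*2 <= n)%N.
Proof. by rewrite ltnS leqNgt ltn_half_double -leqNgt. Qed.

Section Dk.
Variable n : nat.
Definition Sk (k : nat) :=
  [set ab : {ffun 'I_k -> F} * {ffun 'I_(n - k.*2) -> F} | sqf (mon ab.2)].
Definition glue k (ab : {ffun 'I_k -> F} * {ffun 'I_(n - k.*2) -> F}) :=
  fromP n (mon ab.1 ^+ 2 * mon ab.2).
Definition Dk k := glue (k := k) @: Sk k.

Lemma size_glue k (a : {ffun 'I_k -> F}) (b : {ffun 'I_(n - k.*2) -> F}) :
  (k.*2 <= n)%N -> size (mon a ^+ 2 * mon b) = n.+1.
Proof.
move=> kn; rewrite size_Mmonic ?monic_neq0 ?monic_exp ?mon_monic //.
rewrite expr2 size_Mmonic ?monic_neq0 ?mon_monic // !size_mon.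
rewrite -addnn; lia.
Qed.

Lemma monic_glue k (a : {ffun 'I_k -> F}) (b : {ffun 'I_(n - k.*2) -> F}) :
  mon a ^+ 2 * mon b \is monic.
Proof. by rewrite monicMl ?monic_exp ?mon_monic. Qed.

Lemma mon_glue k ab : (k.*2 <= n)%N -> mon (@glue k ab) = mon ab.1 ^+ 2 * mon ab.2.
Proof. by move=> kn; rewrite monK ?monic_glue ?size_glue. Qed.

Lemma card_Dk k : (k.*2 <= n)%N -> #|Dk k| = (#|F| ^ k * s (n - k.*2))%N.
Proof.
move=> kn; rewrite card_in_imset.
  have -> : Sk k = setX [set: {ffun 'I_k -> F}] [set b | sqf (mon b)].
    by apply/setP => -[a b]; rewrite !inE.
  by rewrite cardsX cardsT card_ffun card_ord.
move=> [a b] [a' b']; rewrite !inE /= => sb sb' e.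
have := congr1 (@mon n) e; rewrite !mon_glue //= => e2.
have [/mon_inj -> /mon_inj ->] :=
  decomp_uniq (mon_monic a) (mon_monic a') sb sb' e2.
by [].
Qed.

Lemma Dk_uniq c k k' : (k.*2 <= n)%N -> (k'.*2 <= n)%N ->
  c \in Dk k -> c \in Dk k' -> k = k'.
Proof.
move=> kn kn' /imsetP [[a b] /=]; rewrite inE /= => sb ->.
move=> /imsetP [[a' b'] /=]; rewrite inE /= => sb' /(congr1 (@mon n)).
rewrite !mon_glue //= => e.
have [e1 _] := decomp_uniq (mon_monic a) (mon_monic a') sb sb' e.
by move: (congr1 (fun p : {poly F} => size p) e1); rewrite /= !size_mon => -[].
Qed.

Lemma Dk_ex c : exists2 k, (k.*2 <= n)%N & c \in Dk k.
Proof.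
have [a [b [ma mb sb e]]] := decomp_ex (mon_monic c).
have sa : size a = (size a).-1.+1 by rewrite prednK // size_poly_gt0 monic_neq0.
have sb1 : size b = (size b).-1.+1 by rewrite prednK // size_poly_gt0 monic_neq0.
have sz : n.+1 = ((size a).-1).*2 + (size b).-1.+1.
  rewrite -(size_mon c) e size_Mmonic ?monic_neq0 ?monic_exp //.
  rewrite expr2 size_Mmonic ?monic_neq0 // sa sb1 -addnn; lia.
set k := (size a).-1 in sa sz.
have kn : (k.*2 <= n)%N by move: sz; lia.
have sbn : size b = (n - k.*2).+1 by rewrite sb1; lia.
exists k => //; apply/imsetP.
exists (fromP k a, fromP (n - k.*2) b); first by rewrite inE /= monK.
by rewrite /glue /= !monK // -e fromP_mon.
Qed.

End Dk.

Lemma decomp_count n :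
  (#|F| ^ n = \sum_(k < n./2.+1) #|F| ^ k * s (n - k.*2))%N.
Proof.
have e1 : (#|F| ^ n = \sum_(c : {ffun 'I_n -> F}) 1)%N.
  by rewrite sum1_card card_ffun card_ord.
have e2 : forall c : {ffun 'I_n -> F},
    (\sum_(k < n./2.+1) (c \in Dk n k) = 1)%N.
  move=> c; have [k kn ck] := Dk_ex c.
  have kl : (k < n./2.+1)%N by rewrite half_le.
  rewrite (bigD1 (Ordinal kl)) //= ck big1 // => j /eqP nj.
  case: (boolP (c \in Dk n j)) => // cj; exfalso; apply: nj; apply: val_inj => /=.
  by apply: (Dk_uniq _ kn cj ck); rewrite -half_le.
rewrite e1; transitivity (\sum_(c : {ffun 'I_n -> F}) \sum_(k < n./2.+1) (c \in Dk n k) : nat)%N.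
  by apply: eq_big => // c _; rewrite e2.
rewrite exchange_big /=.
apply: eq_bigr => k _; rewrite -card_Dk -?half_le //.
by rewrite -sum1_card [in RHS]big_mkcond /=; apply: eq_big => // c _; case: (_ \in _).
Qed.

Lemma s_val m : s m.+2 = (#|F| ^ m.+2 - #|F| ^ m.+1)%N.
Proof.
have := decomp_count m.+2; rewrite big_ord_recl /= expn0 mul1n subn0.
have -> : (\sum_(i < m./2.+1) #|F| ^ (bump 0 i) * s (m.+2 - (bump 0 i).*2) =
    #|F| * \sum_(i < m./2.+1) #|F| ^ i * s (m - i.*2))%N.
  rewrite big_distrr /=; apply: eq_bigr => i _.
  by rewrite /bump /= add1n expnS doubleS subSS mulnA.
by rewrite -decomp_count -expnS => ->; rewrite addnK.
Qed.


Lemma card_size m n : (m < n)%N ->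
  #|[set c : {ffun 'I_n -> F} | (size (toP c) == m.+1) && sqf (toP c)]|
  = (#|F|.-1 * s m)%N.
Proof.
move=> mn.
pose S := [set x : F * {ffun 'I_m -> F} | (x.1 != 0) && sqf (mon x.2)].
pose f (x : F * {ffun 'I_m -> F}) := fromP n (x.1 *: mon x.2).
have szf : forall x : F * {ffun 'I_m -> F}, x.1 != 0 -> size (x.1 *: mon x.2) = m.+1.
  by move=> x x0; rewrite size_scale // size_mon.
have tf : forall x : F * {ffun 'I_m -> F}, x.1 != 0 -> toP (f x) = x.1 *: mon x.2.
  by move=> x x0; rewrite toPK // szf.
have -> : [set c : {ffun 'I_n -> F} | (size (toP c) == m.+1) && sqf (toP c)] = f @: S.
  apply/setP => c; rewrite inE; apply/andP/imsetP.
    move=> [/eqP sz sq].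
    have p0 : toP c != 0 by rewrite -size_poly_gt0 sz.
    set l := lead_coef (toP c).
    have l0 : l != 0 by rewrite lead_coef_eq0.
    have mp : l^-1 *: toP c \is monic by rewrite monicE lead_coefZ mulVf.
    have sp : size (l^-1 *: toP c) = m.+1 by rewrite size_scale ?invr_eq0.
    exists (l, fromP m (l^-1 *: toP c)).
      by rewrite inE /= l0 monK // sqfZ ?invr_eq0.
    by rewrite /f /= monK // scalerA mulfV // scale1r fromPK.
  move=> [x]; rewrite inE => /andP [x0 sq] ->.
  rewrite tf // szf // sqfZ //; split => //.
rewrite card_in_imset.
  have -> : S = setX [set~ (0 : F)] [set b | sqf (mon b)].
    by apply/setP => -[a b]; rewrite !inE.
  by rewrite cardsX cardsC1.
move=> [a b] [a' b']; rewrite !inE /= => /andP [a0 sb] /andP [a0' sb'] e.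
have := congr1 (@toP n) e; rewrite !tf //= => e2.
have ea : a = a'.
  have := congr1 lead_coef e2.
  by rewrite !lead_coefZ !(monicP (mon_monic _)) !mulr1.
move: e2; rewrite -ea => e2.
have : mon b = mon b'.
  by rewrite -[mon b]scale1r -(mulVf a0) -scalerA e2 scalerA mulVf // scale1r.
by move/mon_inj => ->.
Qed.

End Count.

Section Ev.
Variable L : fieldType.
Variable h : 'I_2 -> {poly L}.
Definition psi (p : {mpoly L[2]}) : {poly L} := mmap (@polyC L) h p.
Lemma psiM p q : psi (p * q) = psi p * psi q.
Proof. by rewrite /psi rmorphM. Qed.
Lemma psiX i : psi 'X_i = h i.
Proof. by rewrite /psi mmapX mmap1U. Qed.
Lemma psiZ c p : psi (c *: p) = c%:P * psi p.
Proof. by rewrite /psi mmapZ. Qed.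
Lemma psiXn i k : psi ('X_i ^+ k) = h i ^+ k.
Proof. by rewrite /psi rmorphXn /= -/(psi _) psiX. Qed.
Lemma psiB p q : psi (p - q) = psi p - psi q.
Proof. by rewrite /psi rmorphB. Qed.
Lemma psi_sum I (r : seq I) (P : pred I) (f : I -> {mpoly L[2]}) :
  psi (\sum_(i <- r | P i) f i) = \sum_(i <- r | P i) psi (f i).
Proof. by rewrite /psi raddf_sum. Qed.
End Ev.

Section Hom.
Variable L : fieldType.
Definition hom k (P : {poly L}) : {mpoly L[2]} :=
  \sum_(i < k.+1) P`_i *: ('X_0 ^+ i * 'X_1 ^+ (k - i)).

Lemma homB k P Q : hom k (P - Q) = hom k P - hom k Q.
Proof. by rewrite /hom -sumrB; apply: eq_bigr => i _; rewrite coefB scalerBl. Qed.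

Lemma homZ k a P : hom k (a *: P) = a *: hom k P.
Proof. by rewrite /hom scaler_sumr; apply: eq_bigr => i _; rewrite coefZ scalerA. Qed.

Lemma hom0 k : hom k 0 = 0.
Proof. by rewrite /hom big1 // => i _; rewrite coef0 scale0r. Qed.

Lemma homX k Q : hom k.+1 (Q * 'X) = hom k Q * 'X_0.
Proof.
rewrite /hom big_ord_recl coefMX /= scale0r add0r mulr_suml.
apply: eq_bigr => i _; rewrite coefMX /= /bump /= add1n subSS -scalerAl.
by congr (_ *: _); rewrite exprS [RHS]mulrC mulrA.
Qed.

Lemma homY k (Q : {poly L}) : (size Q <= k.+1)%N -> hom k.+1 Q = hom k Q * 'X_1.
Proof.
move=> sQ; rewrite /hom big_ord_recr /=.
have -> : Q`_k.+1 = 0 by apply: (leq_sizeP _ _ sQ).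
rewrite scale0r addr0 mulr_suml.
apply: eq_bigr => i _; rewrite -scalerAl /=.
have ik : (i <= k)%N by rewrite -ltnS.
rewrite (subSn ik).
by congr (_ *: _); rewrite exprSr mulrA.
Qed.

Lemma hom_XsubC k (Q : {poly L}) a : (size Q <= k.+1)%N ->
  hom k.+1 (Q * ('X - a%:P)) = hom k Q * ('X_0 - a *: 'X_1).
Proof.
move=> sQ; rewrite mulrBr homB homX.
have -> : Q * a%:P = a *: Q by rewrite mulrC mul_polyC.
by rewrite homZ (homY sQ) mulrBr scalerAr.
Qed.

Lemma hom_sq k (P R : {poly L}) a : P = R * ('X - a%:P) ^+ 2 -> (size P <= k.+3)%N ->
  hom k.+2 P = hom k R * ('X_0 - a *: 'X_1) ^+ 2.
Proof.
move=> eP sP.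
have [R0|R0] := eqVneq R 0.
  by rewrite eP R0 mul0r !hom0 mul0r.
have m1 : ('X - a%:P) \is monic := monicXsubC a.
have sR1 : size (R * ('X - a%:P)) = (size R).+1.
  by rewrite size_Mmonic // size_XsubC addn2.
have : size P = (size R).+2.
  by rewrite eP expr2 mulrA size_Mmonic // ?sR1 ?size_XsubC ?addn2 // -size_poly_gt0 sR1.
move=> sPR.
rewrite eP expr2 mulrA hom_XsubC; last by rewrite sR1; move: sP; rewrite sPR.
by rewrite hom_XsubC ?mulrA //; move: sP; rewrite sPR.
Qed.

Lemma root2 (P : {poly L}) a : root P a -> root P^`() a ->
  exists R, P = R * ('X - a%:P) ^+ 2.
Proof.
move=> /factor_theorem [Q ->].
rewrite derivM derivXsubC mulr1 /root hornerD hornerM hornerXsubC subrr mulr0 add0r.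
by move=> /factor_theorem [R ->]; exists R; rewrite -mulrA expr2.
Qed.

Lemma root_sq (P W : {poly L}) a : P = ('X - a%:P) ^+ 2 * W ->
  root P a && root P^`() a.
Proof.
have dd : 'X - a%:P %| 'X - a%:P := dvdpp _.
move=> ->; apply/andP; split; rewrite root_factor_theorem.
  by rewrite expr2 -mulrA; apply: dvdp_mulr.
rewrite derivM expr2 derivM derivXsubC mul1r mulr1; apply: dvdp_add.
  by apply: dvdp_mulr; apply: dvdp_add.
by apply: dvdp_mulr; apply: dvdp_mulr.
Qed.

End Hom.

Lemma sum_coefK (L : fieldType) n (P : {poly L}) : (size P <= n)%N ->
  \sum_(i < n) P`_i *: 'X^i = P.
Proof.
move=> sP; rewrite -(poly_def n (fun i => P`_i)); apply/polyP => j.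
rewrite coef_poly; case: ltnP => // h; apply/esym/(leq_sizeP _ _ sP) => //.
Qed.

Lemma psiXp (L : fieldType) h (x : {mpoly L[2]}) n : psi h (x ^+ n) = psi h x ^+ n.
Proof. by rewrite /psi rmorphXn. Qed.

Definition h01 (L : fieldType) : 'I_2 -> {poly L} := fun i => if i == 0 then 'X else 1.
Definition h10 (L : fieldType) : 'I_2 -> {poly L} := fun i => if i == 0 then 1 else 'X.

Lemma psi_hom (L : fieldType) k (P : {poly L}) : (size P <= k.+1)%N ->
  psi (@h01 L) (hom k P) = P.
Proof.
move=> sP; rewrite /hom psi_sum -[RHS](sum_coefK sP); apply: eq_bigr => i _.
by rewrite psiZ psiM !psiXn /h01 /= expr1n mulr1 mul_polyC.
Qed.

Lemma psi_rev (L : fieldType) k (P : {poly L}) :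
  psi (@h10 L) (hom k P) = \sum_(i < k.+1) P`_i *: 'X^(k - i).
Proof.
rewrite /hom psi_sum; apply: eq_bigr => i _.
by rewrite psiZ psiM !psiXn /h10 /= expr1n mul1r mul_polyC.
Qed.

Section Main.
Variable F : finFieldType.
Variable e : nat.
Variable c : {ffun 'I_e.+3 -> F}.
Local Notation p := (toP c).

Lemma map_binform (L : fieldType) (iota : {rmorphism F -> L}) :
  map_mpoly iota (binform c) = hom e.+2 (map_poly iota p).
Proof.
rewrite /binform raddf_sum /hom; apply: eq_bigr => i _.
by rewrite /= map_mpolyZ rmorphM !rmorphXn /= !map_mpolyX coef_map coef_toP.
Qed.


Lemma bad_hdr : ~~ ((e.+2 <= size p)%N && sqf p) -> has_double_root c.
Proof.
have [K [iota _]] := countable_algebraic_closure F.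
move=> H; right; exists K, iota.
set P := map_poly iota p.
have sP : size P = size p := size_map_poly iota p.
have mb := map_binform iota.
move: H; rewrite negb_and -ltnNge => /orP [sz|nsq].
  exists 1, 0; split; first by rewrite xpair_eqE oner_eq0.
  exists (hom e P); rewrite mb scale0r sub0r scale1r sqrrN.
  rewrite (@homY _ e.+1) ?sP ?(ltnW sz) // (@homY _ e) ?sP //.
  by rewrite expr2 -mulrA mulrC.
pose G := gcdp p p^`().
have : size (map_poly iota G) != 1 by rewrite size_map_poly.
move/closed_rootP => [a ra].
rewrite gcdp_map -deriv_map in ra.
have r1 : root P a := root_dvdp (dvdp_gcdl _ _) ra.
have r2 : root P^`() a := root_dvdp (dvdp_gcdr _ _) ra.
have [R eR] := root2 r1 r2.
exists a, 1; split; first by rewrite xpair_eqE oner_eq0 andbF.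
exists (hom e R); rewrite mb scale1r (hom_sq eR) ?sP ?size_toP //.
by rewrite mulrC.
Qed.


Lemma hdr_bad : has_double_root c -> ~~ ((e.+2 <= size p)%N && sqf p).
Proof.
have binF : binform c = hom e.+2 p.
  by rewrite /binform /hom; apply: eq_bigr => i _; rewrite coef_toP.
case => [b0 | [L [iota [a [b [ab [g eg]]]]]]].
  have : psi (@h01 F) (binform c) = 0 by rewrite b0 /psi raddf0.
  by rewrite binF psi_hom ?size_toP // => ->; rewrite size_poly0.
apply/negP => /andP [sz sq].
set P := map_poly iota p.
have sP : size P = size p := size_map_poly iota p.
have mb := map_binform iota.
have [b0|b0] := eqVneq b 0.
  have a0 : a != 0 by move: ab; rewrite b0 xpair_eqE eqxx andbT.
  have := congr1 (psi (@h10 L)) eg.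
  rewrite mb psi_rev psiM expr2 psiM (psiB (h10 L)) !psiZ !psiX /h10 /= b0 polyC0 !mul0r sub0r mulrNN.
  have -> : a%:P * 'X * (a%:P * 'X) * psi (@h10 L) g = 'X^2 * (a%:P * a%:P * psi (@h10 L) g).
    by rewrite expr2; ring.
  move=> E.
  have cf : forall j, (j < 2)%N -> \sum_(i < e.+3 | true && (e.+2 - i == j)%N) P`_i = 0.
    move=> j j2; move: (congr1 (fun q : {poly L} => q`_j) E).
    by rewrite coef_sumMXn coefXnM j2.
  have c2 : p`_e.+2 = 0.
    have := cf 0%N erefl; rewrite (big_pred1 ord_max) /=.
      by rewrite coef_map => /eqP; rewrite fmorph_eq0 => /eqP.
    move=> i /=; rewrite subn_eq0; apply/idP/eqP => [h|->//].
    by apply: val_inj => /=; have := ltn_ord i; lia.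
  have c1 : p`_e.+1 = 0.
    have := cf 1%N erefl; rewrite (big_pred1 (inord e.+1)) /=.
      by rewrite coef_map inordK // => /eqP; rewrite fmorph_eq0 => /eqP.
    move=> i /=; apply/idP/eqP => [/eqP h|->].
      by apply: val_inj => /=; rewrite inordK //; have := ltn_ord i; lia.
    by rewrite inordK // subSn // subnn.
  have : (size p <= e.+1)%N.
    apply/leq_sizeP => j; rewrite leq_eqVlt => /orP [/eqP <-//|].
    rewrite leq_eqVlt => /orP [/eqP <-//|h].
    exact: coef_toP_ge.
  by rewrite leqNgt sz.
have := congr1 (psi (@h01 L)) eg.
rewrite mb psi_hom ?sP ?size_toP // psiM psiXp (psiB (h01 L)) !psiZ !psiX /h01 /= mulr1.
have -> : b%:P * 'X - a%:P = b%:P * ('X - (a / b)%:P).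
  by rewrite mulrBr -polyCM [b * _]mulrC divfK.
rewrite exprMn -mulrA mulrCA => E.
have := root_sq E; case/andP => r1.
have cop : coprimep P P^`() by rewrite deriv_map coprimep_map.
by rewrite /root (negbTE (coprimep_root cop r1)).
Qed.

End Main.

End H.
Import H.
Import GRing.Theory.
Unset Implicit Arguments. Set Strict Implicit. Set Printing Implicit Defensive.

Theorem lemma4p1 (F : finFieldType) (d : nat) (hd : 3 <= d) :
  #|Bd F d| = (#|F| ^ d + #|F| ^ d.-1 - #|F| ^ d.-2)%N.
Proof.
case: d hd => [|[|[|e]]] // _.
pose A := [set c : {ffun 'I_e.+4 -> F} | (e.+3 <= size (toP c))%N && sqf (toP c)].
have -> : Bd F e.+3 = ~: A.
  apply/setP => c; rewrite !inE; apply/asboolP/idP => [h|h].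
    exact: (@hdr_bad F e.+1 c).
  exact: (@bad_hdr F e.+1 c).
pose G1 := [set c : {ffun 'I_e.+4 -> F} | (size (toP c) == e.+4) && sqf (toP c)].
pose G0 := [set c : {ffun 'I_e.+4 -> F} | (size (toP c) == e.+3) && sqf (toP c)].
have eA : A = G1 :|: G0.
  apply/setP => c; rewrite !inE; have := size_toP c.
  case: (sqf _); rewrite ?andbF ?andbT ?orbF //.
  move: (size (toP c)) => n hn; apply/idP/orP => [h|[/eqP->|/eqP->]] //.
  have : n = e.+4 \/ n = e.+3 by lia.
  by case => ->; [left|right].
have dj : G1 :&: G0 = set0.
  apply/setP => c; rewrite !inE; apply/negbTE.
  case: (size _ == _) / eqP => [->|] //=.
  have -> : (e.+4 == e.+3) = false by lia.
  by rewrite /= andbF.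
have cA : #|A| = (#|F|.-1 * s F e.+3 + #|F|.-1 * s F e.+2)%N.
  by rewrite eA cardsU dj cards0 subn0 !card_size.
have := cardsC A; rewrite card_ffun card_ord cA => E.
have -> : #|~: A| = (#|F| ^ e.+4 - (#|F|.-1 * s F e.+3 + #|F|.-1 * s F e.+2))%N.
  by rewrite -E addKn.
rewrite (s_val F e.+1) (s_val F e) /=.
have q1 : (1 < #|F|)%N.
  by apply/card_gt1P; exists 0%R, 1%R; rewrite eq_sym oner_eq0.
move: (#|F|) q1 => q q1.
rewrite !expnS.
move: (q ^ e)%N => x.
nia.
Qed.
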